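(* For every topological space $X$, the singular cubical set $\mathrm{Sing}(X)$, regarded as a type over a terminal cubical set, admits a composition structure.
   Context: Fix a countably infinite set of names. $\mathsf{dM}(J)$ is the free de Morgan algebra on $J$. The cube category $\mathcal{C}$ has finite sets of names as objects; a morphism $f:J\to I$ is a map $I\to\mathsf{dM}(J)$, composed by substitution (Kleisli composition). Write $I,i$ for $I\cup\{i\}$ with $i\notin I$. For $b\in\{0,1\}$, $(ib):I\to I,i$ sends $i\mapsto b$ and $k\mapsto k$ for $k\in I$. For $f:J\to I$ and $j\notin J$, $(f,i{=}j):J,j\to I,i$ sends $i\mapsto j$ and $k\mapsto f(k)$. A cubical set is a functor $\mathcal{C}^{op}\to\mathbf{Set}$; write $xf$ for the restriction of $x$ along $f$. Each $f:J\to I$ induces a continuous map $[0,1]^J\to[0,1]^I$, $(fu)_k=f(k)$ evaluated at $u$ using $\min,\max,1-x$. $\mathrm{Sing}(X)(I)$ is the set of continuous maps $[0,1]^I\to X$, with restriction along $f$ given by precomposition with the induced map. The face lattice $\mathbb{F}$ is the distributive lattice generated by $(k=0),(k=1)$ for names $k$ with $(k=0)\wedge(k=1)=0_\mathbb{F}$; $\mathbb{F}(I)$ uses names in $I$; for $\varphi\in\mathbb{F}(I)$ and $f:J\to I$, $\varphi f\in\mathbb{F}(J)$ substitutes $(k=1)\mapsto(f(k)=1)$, $(k=0)\mapsto(1-f(k)=1)$, where $r\mapsto(r=1)$ is the lattice map $\mathsf{dM}(J)\to\mathbb{F}(J)$ with $j\mapsto(j=1)$, $1-j\mapsto(j=0)$,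 $0\mapsto0_\mathbb{F}$, $1\mapsto1_\mathbb{F}$. A composition structure on a cubical set $Y$ (as a type over the terminal cubical set) assigns to every $I$, $i\notin I$, $\varphi\in\mathbb{F}(I)$, family $u=(u_f)$ indexed by morphisms $f:J\to I,i$ with $\varphi f=1_\mathbb{F}$ (where $\varphi$ is viewed in $\mathbb{F}(I,i)$), $u_f\in Y(J)$, with $u_f g=u_{fg}$, and $a_0\in Y(I)$ with $a_0 f=u_{(i0)f}$ for all $f:J\to I$ with $\varphi f=1_\mathbb{F}$, an element $\mathrm{comp}(I,i,\varphi,u,a_0)\in Y(I)$ such that (i) for all $f:J\to I$ and $j\notin J$, $\mathrm{comp}(I,i,\varphi,u,a_0)f=\mathrm{comp}(J,j,\varphi f,u',a_0f)$ where $u'_g=u_{(f,i=j)g}$; and (ii) if $\varphi=1_\mathbb{F}$ then $\mathrm{comp}(I,i,\varphi,u,a_0)=u_{(i1)}$. *)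

(* Defs.v *)
From Stdlib Require Import Reals Lra Lia Bool Arith.
Open Scope R_scope.

(* An object is a finite set of names, represented by its (finitely supported)
   characteristic function; with functional extensionality equal sets are
   equal objects. *)
Definition cobj : Type :=
  { p : nat -> bool | exists N : nat, forall n : nat, (N <= n)%nat -> p n = false }.

Definition mem (I : cobj) (n : nat) : bool := proj1_sig I n.

Lemma add_fin (I : cobj) (i : nat) :
  exists N : nat, forall n : nat, (N <= n)%nat -> (mem I n || Nat.eqb n i) = false.
Proof.
  destruct (proj2_sig I) as [N H]. exists (Nat.max N (S i)). intros n Hn.
  unfold mem. rewrite H by lia. simpl. apply Nat.eqb_neq. lia.
Qed.

Definition add (I : cobj) (i : nat) : cobj :=
  exist _ (fun n => mem I n || Nat.eqb n i) (add_fin I i).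

(** * Free de Morgan algebra dM(J) *)
Inductive dM : Type :=
| dvar (n : nat) | dzero | done
| dmeet (a b : dM) | djoin (a b : dM) | dneg (a : dM).

Inductive dM_eq : dM -> dM -> Prop :=
| dMe_refl a : dM_eq a a
| dMe_sym a b : dM_eq a b -> dM_eq b a
| dMe_trans a b c : dM_eq a b -> dM_eq b c -> dM_eq a c
| dMe_meet a a' b b' : dM_eq a a' -> dM_eq b b' -> dM_eq (dmeet a b) (dmeet a' b')
| dMe_join a a' b b' : dM_eq a a' -> dM_eq b b' -> dM_eq (djoin a b) (djoin a' b')
| dMe_neg a a' : dM_eq a a' -> dM_eq (dneg a) (dneg a')
| dMe_meetA a b c : dM_eq (dmeet a (dmeet b c)) (dmeet (dmeet a b) c)
| dMe_joinA a b c : dM_eq (djoin a (djoin b c)) (djoin (djoin a b) c)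
| dMe_meetC a b : dM_eq (dmeet a b) (dmeet b a)
| dMe_joinC a b : dM_eq (djoin a b) (djoin b a)
| dMe_absM a b : dM_eq (dmeet a (djoin a b)) a
| dMe_absJ a b : dM_eq (djoin a (dmeet a b)) a
| dMe_distr a b c : dM_eq (dmeet a (djoin b c)) (djoin (dmeet a b) (dmeet a c))
| dMe_meet1 a : dM_eq (dmeet a done) a
| dMe_join0 a : dM_eq (djoin a dzero) a
| dMe_negK a : dM_eq (dneg (dneg a)) a
| dMe_negM a b : dM_eq (dneg (dmeet a b)) (djoin (dneg a) (dneg b))
| dMe_neg0 : dM_eq (dneg dzero) done.

Fixpoint dM_in (J : cobj) (t : dM) : Prop :=
  match t with
  | dvar n => mem J n = true
  | dzero | done => True
  | dmeet a b | djoin a b => dM_in J a /\ dM_in J b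
  | dneg a => dM_in J a
  end.

Fixpoint subst (s : nat -> dM) (t : dM) : dM :=
  match t with
  | dvar n => s n
  | dzero => dzero
  | done => done
  | dmeet a b => dmeet (subst s a) (subst s b)
  | djoin a b => djoin (subst s a) (subst s b)
  | dneg a => dneg (subst s a)
  end.

Lemma subst_in (J K : cobj) (s : nat -> dM) (t : dM) :
  dM_in J t -> (forall n, mem J n = true -> dM_in K (s n)) -> dM_in K (subst s t).
Proof. induction t; simpl; intuition. Qed.

Lemma dM_in_mono (J K : cobj) (t : dM) :
  (forall n, mem J n = true -> mem K n = true) -> dM_in J t -> dM_in K t.
Proof. induction t; simpl; intuition. Qed.

(* A morphism f : J -> I is a map I -> dM(J); it is represented by a function
   on all names whose values on I are terms over J (values outside I are
   irrelevant). Morphisms are identified up to [heq]. *)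
Record hom (J I : cobj) : Type := mkHom {
  hmap :> nat -> dM ;
  hwf : forall k, mem I k = true -> dM_in J (hmap k) }.
Arguments mkHom {J I}.
Arguments hmap {J I}.
Arguments hwf {J I}.

Definition heq {J I : cobj} (f g : hom J I) : Prop :=
  forall k, mem I k = true -> dM_eq (f k) (g k).

Definition hom_id (I : cobj) : hom I I :=
  mkHom (fun n => dvar n) (fun k h => h).

Definition hom_comp {I J K : cobj} (f : hom J I) (g : hom K J) : hom K I :=
  mkHom (fun k => subst (hmap g) (f k))
        (fun k h => subst_in J K (hmap g) (f k) (hwf f k h) (hwf g)).

Lemma face_i_wf (I : cobj) (i : nat) (b : bool) :
  forall k, mem (add I i) k = true ->
  dM_in I (if Nat.eqb k i then (if b then done else dzero) else dvar k).
Proof.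
  intros k Hk. unfold add, mem in Hk; simpl in Hk. revert Hk.
  destruct (Nat.eqb k i); simpl.
  - intros _. destruct b; exact Logic.I.
  - rewrite orb_false_r. auto.
Qed.

Definition face_i (I : cobj) (i : nat) (b : bool) : hom I (add I i) :=
  mkHom (fun k => if Nat.eqb k i then (if b then done else dzero) else dvar k)
        (face_i_wf I i b).

Lemma hom_ext_wf {J I : cobj} (f : hom J I) (i j : nat) :
  forall k, mem (add I i) k = true ->
  dM_in (add J j) (if Nat.eqb k i then dvar j else f k).
Proof.
  intros k Hk. unfold add, mem in Hk; simpl in Hk. revert Hk.
  destruct (Nat.eqb k i); simpl.
  - intros _. unfold mem; simpl. rewrite Nat.eqb_refl, orb_true_r. reflexivity.
  - rewrite orb_false_r. intros Hk. apply (dM_in_mono J).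
    + intros n Hn. unfold mem; simpl. fold (mem J n). rewrite Hn. reflexivity.
    + exact (hwf f k Hk).
Qed.

Definition hom_ext {J I : cobj} (f : hom J I) (i j : nat) : hom (add J j) (add I i) :=
  mkHom (fun k => if Nat.eqb k i then dvar j else f k) (hom_ext_wf f i j).

Record Top : Type := {
  tpt :> Type ;
  topen : (tpt -> Prop) -> Prop ;
  topen_full : topen (fun _ => True) ;
  topen_inter : forall U V, topen U -> topen V -> topen (fun x => U x /\ V x) ;
  topen_union : forall A : (tpt -> Prop) -> Prop,
      (forall U, A U -> topen U) -> topen (fun x => exists U, A U /\ U x) }.

Definition cube (I : cobj) : Type :=
  { u : {k : nat | mem I k = true} -> R | forall k, 0 <= u k <= 1 }.

(* open subsets of [0,1]^I (product = sup-metric topology, subspace of R^I) *)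
Definition cube_open (I : cobj) (U : cube I -> Prop) : Prop :=
  forall u, U u -> exists eps, 0 < eps /\
    forall v : cube I, (forall k, Rabs (proj1_sig v k - proj1_sig u k) < eps) -> U v.

Definition cont (X : Top) (I : cobj) (g : cube I -> X) : Prop :=
  forall V, topen X V -> cube_open I (fun u => V (g u)).

Fixpoint ev (rho : nat -> R) (t : dM) : R :=
  match t with
  | dvar n => rho n
  | dzero => 0
  | done => 1
  | dmeet a b => Rmin (ev rho a) (ev rho b)
  | djoin a b => Rmax (ev rho a) (ev rho b)
  | dneg a => 1 - ev rho a
  end.

Definition sb (b : bool) : {b = true} + {b = false} :=
  match b as b0 return {b0 = true} + {b0 = false} with
  | true => left eq_refl | false => right eq_refl end.

Definition extv {I : cobj} (u : cube I) (n : nat) : R :=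
  match sb (mem I n) with
  | left h => proj1_sig u (exist _ n h)
  | right _ => 0
  end.

Lemma extv_bound {I : cobj} (u : cube I) : forall n, 0 <= extv u n <= 1.
Proof. intros n. unfold extv. destruct (sb (mem I n)). apply (proj2_sig u). lra. Qed.

Lemma ev_bound (rho : nat -> R) (t : dM) :
  (forall n, 0 <= rho n <= 1) -> 0 <= ev rho t <= 1.
Proof.
  intros H; induction t; simpl; auto; try lra;
  try (unfold Rmin; destruct Rle_dec; lra);
  try (unfold Rmax; destruct Rle_dec; lra).
Qed.

Definition cube_map {J I : cobj} (f : hom J I) (u : cube J) : cube I :=
  exist (fun w : {k : nat | mem I k = true} -> R => forall k, 0 <= w k <= 1)
        (fun k => ev (extv u) (f (proj1_sig k)))
        (fun k => ev_bound (extv u) (f (proj1_sig k)) (extv_bound u)).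

Lemma ev_lip (rho sigma : nat -> R) (eps : R) (t : dM) :
  0 < eps -> (forall n, Rabs (rho n - sigma n) < eps) ->
  Rabs (ev rho t - ev sigma t) < eps.
Proof.
  intros He H; induction t; simpl; auto;
  try (apply Rabs_def1; lra);
  repeat match goal with
         | Hx : Rabs _ < _ |- _ => apply Rabs_def2 in Hx; destruct Hx
         end;
  apply Rabs_def1;
  try (unfold Rmin; repeat destruct Rle_dec; lra);
  try (unfold Rmax; repeat destruct Rle_dec; lra); lra.
Qed.

Lemma cube_map_lip {J I : cobj} (f : hom J I) (u v : cube J) (eps : R) :
  0 < eps -> (forall k, Rabs (proj1_sig v k - proj1_sig u k) < eps) ->
  forall k, Rabs (proj1_sig (cube_map f v) k - proj1_sig (cube_map f u) k) < eps.
Proof.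
  intros He H k. simpl. apply ev_lip; auto. intros n. unfold extv.
  destruct (sb (mem J n)). apply H. apply Rabs_def1; lra.
Qed.

Lemma cont_comp (X : Top) {J I : cobj} (f : hom J I) (g : cube I -> X) :
  cont X I g -> cont X J (fun u => g (cube_map f u)).
Proof.
  intros Hg V HV u Hu. destruct (Hg V HV (cube_map f u) Hu) as [eps [He Hv]].
  exists eps; split; auto. intros v Hvu. apply Hv. apply cube_map_lip; auto.
Qed.

Record cdata : Type := {
  ob : cobj -> Type ;
  res : forall (I J : cobj), hom J I -> ob I -> ob J }.
Arguments res c {I J} _ _.

Definition sing_ob (X : Top) (I : cobj) : Type := { g : cube I -> X | cont X I g }.

Definition sing_res (X : Top) (I J : cobj) (f : hom J I) (x : sing_ob X I) : sing_ob X J :=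
  exist _ (fun u => proj1_sig x (cube_map f u)) (cont_comp X f (proj1_sig x) (proj2_sig x)).

Definition Sing (X : Top) : cdata := {| ob := sing_ob X ; res := sing_res X |}.

(** * The face lattice F *)
Inductive face : Type :=
| fbot | ftop | feq0 (k : nat) | feq1 (k : nat)
| fmeet (a b : face) | fjoin (a b : face).

Inductive face_eq : face -> face -> Prop :=
| fe_refl a : face_eq a a
| fe_sym a b : face_eq a b -> face_eq b a
| fe_trans a b c : face_eq a b -> face_eq b c -> face_eq a c
| fe_meet a a' b b' : face_eq a a' -> face_eq b b' -> face_eq (fmeet a b) (fmeet a' b')
| fe_join a a' b b' : face_eq a a' -> face_eq b b' -> face_eq (fjoin a b) (fjoin a' b')
| fe_meetA a b c : face_eq (fmeet a (fmeet b c)) (fmeet (fmeet a b) c)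
| fe_joinA a b c : face_eq (fjoin a (fjoin b c)) (fjoin (fjoin a b) c)
| fe_meetC a b : face_eq (fmeet a b) (fmeet b a)
| fe_joinC a b : face_eq (fjoin a b) (fjoin b a)
| fe_absM a b : face_eq (fmeet a (fjoin a b)) a
| fe_absJ a b : face_eq (fjoin a (fmeet a b)) a
| fe_distr a b c : face_eq (fmeet a (fjoin b c)) (fjoin (fmeet a b) (fmeet a c))
| fe_meet1 a : face_eq (fmeet a ftop) a
| fe_join0 a : face_eq (fjoin a fbot) a
| fe_01 k : face_eq (fmeet (feq0 k) (feq1 k)) fbot.

Fixpoint face_in (I : cobj) (p : face) : Prop :=
  match p with
  | fbot | ftop => True
  | feq0 k | feq1 k => mem I k = true
  | fmeet a b | fjoin a b => face_in I a /\ face_in I b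
  end.

(* tf true r = (r = 1),  tf false r = (1 - r = 1): the lattice map dM(J) -> F(J) *)
Fixpoint tf (b : bool) (t : dM) : face :=
  match t with
  | dvar j => if b then feq1 j else feq0 j
  | dzero => if b then fbot else ftop
  | done => if b then ftop else fbot
  | dmeet x y => if b then fmeet (tf b x) (tf b y) else fjoin (tf b x) (tf b y)
  | djoin x y => if b then fjoin (tf b x) (tf b y) else fmeet (tf b x) (tf b y)
  | dneg x => tf (negb b) x
  end.

Fixpoint face_subst (s : nat -> dM) (p : face) : face :=
  match p with
  | fbot => fbot
  | ftop => ftop
  | feq0 k => tf false (s k)
  | feq1 k => tf true (s k)
  | fmeet a b => fmeet (face_subst s a) (face_subst s b)
  | fjoin a b => fjoin (face_subst s a) (face_subst s b)
  end.

Definition family (Y : cdata) (I : cobj) (i : nat) (phi : face) : Type :=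
  forall (J : cobj) (f : hom J (add I i)), face_eq (face_subst f phi) ftop -> ob Y J.

Definition family_ok (Y : cdata) (I : cobj) (i : nat) (phi : face)
    (u : family Y I i phi) : Prop :=
  (* u is indexed by morphisms, i.e. by equivalence classes of representatives *)
  (forall J (f g : hom J (add I i)) h h', heq f g -> u J f h = u J g h') /\
  (forall J K (f : hom J (add I i)) (g : hom K J) h h',
      res Y g (u J f h) = u K (hom_comp f g) h').

Definition base_ok (Y : cdata) (I : cobj) (i : nat) (phi : face)
    (u : family Y I i phi) (a0 : ob Y I) : Prop :=
  forall J (f : hom J I) (h : face_eq (face_subst f phi) ftop)
    (h' : face_eq (face_subst (hom_comp (face_i I i false) f) phi) ftop),
    res Y f a0 = u J (hom_comp (face_i I i false) f) h'.

Definition valid (Y : cdata) (I : cobj) (i : nat) (phi : face)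
    (u : family Y I i phi) (a0 : ob Y I) : Prop :=
  mem I i = false /\ face_in I phi /\ family_ok Y I i phi u /\ base_ok Y I i phi u a0.

Record comp_structure (Y : cdata) : Type := {
  comp : forall (I : cobj) (i : nat) (phi : face), family Y I i phi -> ob Y I -> ob Y I ;
  (* comp is well defined on F(I) (phi is an element of the lattice) *)
  comp_proper : forall I i phi psi (u : family Y I i phi) (v : family Y I i psi) a0,
      valid Y I i phi u a0 -> valid Y I i psi v a0 -> face_eq phi psi ->
      (forall J f h h', u J f h = v J f h') ->
      comp I i phi u a0 = comp I i psi v a0 ;
  comp_nat : forall I i phi (u : family Y I i phi) a0 J j (f : hom J I)
      (u' : family Y J j (face_subst f phi)),
      valid Y I i phi u a0 ->
      valid Y J j (face_subst f phi) u' (res Y f a0) ->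
      (forall K (g : hom K (add J j)) h h', u' K g h = u K (hom_comp (hom_ext f i j) g) h') ->
      res Y f (comp I i phi u a0) = comp J j (face_subst f phi) u' (res Y f a0) ;
  comp_full : forall I i phi (u : family Y I i phi) a0
      (h : face_eq (face_subst (face_i I i true) phi) ftop),
      valid Y I i phi u a0 -> face_eq phi ftop ->
      comp I i phi u a0 = u I (face_i I i true) h }.

(* Main.v *)
Require Import Defs.
From Stdlib Require Import Reals Lra Lia Bool Arith List Setoid Morphisms.
From Stdlib Require Import ClassicalEpsilon ProofIrrelevance FunctionalExtensionality.
Open Scope R_scope.

Ltac rm := unfold Rmin, Rmax in *; repeat destruct Rle_dec; lra.

Lemma Rabs_def2b x a : Rabs x <= a -> - a <= x <= a.
Proof. unfold Rabs; destruct Rcase_abs; lra. Qed.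
Lemma Rabs_le' x a : - a <= x <= a -> Rabs x <= a.
Proof. unfold Rabs; destruct Rcase_abs; lra. Qed.
Lemma Rabs_lt_iff x a : Rabs x < a <-> - a < x < a.
Proof. unfold Rabs; destruct Rcase_abs; split; intros; lra. Qed.

#[export] Instance fe_Equiv : Equivalence face_eq.
Proof. split. intro; apply fe_refl. intros a b; apply fe_sym. intros a b c; apply fe_trans. Qed.
#[export] Instance fmeet_Proper : Proper (face_eq ==> face_eq ==> face_eq) fmeet.
Proof. intros a a' Ha b b' Hb; apply fe_meet; auto. Qed.
#[export] Instance fjoin_Proper : Proper (face_eq ==> face_eq ==> face_eq) fjoin.
Proof. intros a a' Ha b b' Hb; apply fe_join; auto. Qed.

#[export] Instance dM_Equiv : Equivalence dM_eq.
Proof. split. intro; apply dMe_refl. intros a b; apply dMe_sym. intros a b c; apply dMe_trans. Qed.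
#[export] Instance dmeet_Proper : Proper (dM_eq ==> dM_eq ==> dM_eq) dmeet.
Proof. intros a a' Ha b b' Hb; apply dMe_meet; auto. Qed.
#[export] Instance djoin_Proper : Proper (dM_eq ==> dM_eq ==> dM_eq) djoin.
Proof. intros a a' Ha b b' Hb; apply dMe_join; auto. Qed.
#[export] Instance dneg_Proper : Proper (dM_eq ==> dM_eq) dneg.
Proof. intros a a' Ha; apply dMe_neg; auto. Qed.

Lemma fe_meet_top_l a : face_eq (fmeet ftop a) a.
Proof. rewrite fe_meetC. apply fe_meet1. Qed.
Lemma fe_join_bot_l a : face_eq (fjoin fbot a) a.
Proof. rewrite fe_joinC. apply fe_join0. Qed.
Lemma fe_join_top_l a : face_eq (fjoin ftop a) ftop.
Proof. rewrite <- (fe_meet_top_l a) at 1. apply fe_absJ. Qed.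
Lemma fe_join_top_r a : face_eq (fjoin a ftop) ftop.
Proof. rewrite fe_joinC. apply fe_join_top_l. Qed.
Lemma fe_meet_bot_l a : face_eq (fmeet fbot a) fbot.
Proof. rewrite <- (fe_join_bot_l a) at 1. apply fe_absM. Qed.
Lemma fe_meet_bot_r a : face_eq (fmeet a fbot) fbot.
Proof. rewrite fe_meetC. apply fe_meet_bot_l. Qed.

Lemma dm_meet1_l a : dM_eq (dmeet done a) a.
Proof. rewrite dMe_meetC. apply dMe_meet1. Qed.
Lemma dm_join0_l a : dM_eq (djoin dzero a) a.
Proof. rewrite dMe_joinC. apply dMe_join0. Qed.
Lemma dm_join1_l a : dM_eq (djoin done a) done.
Proof. rewrite <- (dm_meet1_l a) at 1. apply dMe_absJ. Qed.
Lemma dm_meet0_l a : dM_eq (dmeet dzero a) dzero.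
Proof. rewrite <- (dm_join0_l a) at 1. apply dMe_absM. Qed.
Lemma dm_neg1 : dM_eq (dneg done) dzero.
Proof. rewrite <- dMe_neg0. apply dMe_negK. Qed.

Lemma tf_subst s b t : tf b (subst s t) = face_subst s (tf b t).
Proof.
  revert b; induction t; intros b; destruct b; simpl; try rewrite IHt1, IHt2; try rewrite IHt; auto.
Qed.

Lemma face_subst_subst s s' p :
  face_subst s' (face_subst s p) = face_subst (fun k => subst s' (s k)) p.
Proof. induction p; simpl; try rewrite IHp1, IHp2; auto; rewrite tf_subst; auto. Qed.

Lemma face_subst_comp {I J K} (f : hom J I) (g : hom K J) p :
  face_subst (hom_comp f g) p = face_subst g (face_subst f p).
Proof. rewrite face_subst_subst. reflexivity. Qed.

Lemma face_subst_ext (K : cobj) s s' p : face_in K p ->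
  (forall k, mem K k = true -> s k = s' k) -> face_subst s p = face_subst s' p.
Proof. induction p; simpl; intros Hin H; try (f_equal; tauto); rewrite H; auto. Qed.

Lemma face_in_mono (I K : cobj) p : (forall n, mem I n = true -> mem K n = true) ->
  face_in I p -> face_in K p.
Proof. induction p; simpl; intuition. Qed.

Lemma T01 t : face_eq (fmeet (tf false t) (tf true t)) fbot.
Proof.
  induction t; simpl.
  - apply fe_01.
  - apply fe_meet_top_l.
  - apply fe_meet_bot_l.
  - rewrite fe_meetC, fe_distr.
    rewrite (fe_meetC (fmeet _ _) (tf false t1)), fe_meetA, IHt1, fe_meet_bot_l.
    rewrite (fe_meetC (tf true t1) (tf true t2)).
    rewrite (fe_meetC (fmeet _ _) (tf false t2)), fe_meetA, IHt2, fe_meet_bot_l.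
    apply fe_join0.
  - rewrite fe_distr.
    rewrite (fe_meetC (tf false t1) (tf false t2)), <- fe_meetA, IHt1, fe_meet_bot_r.
    rewrite (fe_meetC (tf false t2) (tf false t1)), <- fe_meetA, IHt2, fe_meet_bot_r.
    apply fe_join0.
  - rewrite fe_meetC; exact IHt.
Qed.

Lemma face_subst_cong s p q : face_eq p q -> face_eq (face_subst s p) (face_subst s q).
Proof.
  induction 1; simpl; try (constructor; auto; fail); try (econstructor; eauto; fail).
  apply T01.
Qed.

(** ** Boolean-style satisfaction of a face at a real point *)
Fixpoint sat (p : face) (rho : nat -> R) : Prop :=
  match p with
  | fbot => False
  | ftop => True
  | feq0 k => rho k = 0
  | feq1 k => rho k = 1
  | fmeet a b => sat a rho /\ sat b rho
  | fjoin a b => sat a rho \/ sat b rho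
  end.

Lemma sat_inv p q rho : face_eq p q -> (sat p rho <-> sat q rho).
Proof. induction 1; simpl; try tauto. split; [intros [H1 H2]; lra | tauto]. Qed.

Definition bnd (rho : nat -> R) := forall n, 0 <= rho n <= 1.

Lemma sat_tf rho t : bnd rho ->
  (sat (tf true t) rho <-> ev rho t = 1) /\ (sat (tf false t) rho <-> ev rho t = 0).
Proof.
  intros Hb. induction t; simpl.
  - tauto.
  - split; split; intros; try lra; tauto.
  - split; split; intros; try lra; tauto.
  - pose proof (ev_bound rho t1 Hb). pose proof (ev_bound rho t2 Hb).
    destruct IHt1 as [A1 B1], IHt2 as [A2 B2]. rewrite A1, A2, B1, B2.
    split; split; intros; rm.
  - pose proof (ev_bound rho t1 Hb). pose proof (ev_bound rho t2 Hb).
    destruct IHt1 as [A1 B1], IHt2 as [A2 B2]. rewrite A1, A2, B1, B2.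
    split; split; intros; rm.
  - destruct IHt as [A B]. simpl. rewrite A, B. split; split; intros; lra.
Qed.

Lemma sat_subst s p rho : bnd rho ->
  (sat (face_subst s p) rho <-> sat p (fun k => ev rho (s k))).
Proof.
  intros Hb. induction p; simpl; try tauto.
  - apply (sat_tf rho (s k) Hb).
  - apply (sat_tf rho (s k) Hb).
Qed.

Lemma sat_ext (K : cobj) p rho rho' : face_in K p ->
  (forall k, mem K k = true -> rho k = rho' k) -> (sat p rho <-> sat p rho').
Proof.
  intros Hin H. induction p; simpl in *; try tauto; rewrite H; tauto.
Qed.

Lemma sat_mono (K : cobj) p rho rho' : face_in K p ->
  (forall k, mem K k = true -> (rho k = 1 -> rho' k = 1) /\ (rho k = 0 -> rho' k = 0)) ->
  sat p rho -> sat p rho'.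
Proof.
  intros Hin H. induction p; simpl in *; try tauto; intros; apply H; auto.
Qed.

Lemma sat_face (K : cobj) p rho (s : nat -> dM) : face_in K p -> sat p rho ->
  (forall k, mem K k = true -> rho k = 1 -> s k = done) ->
  (forall k, mem K k = true -> rho k = 0 -> s k = dzero) ->
  face_eq (face_subst s p) ftop.
Proof.
  intros Hin Hs H1 H0. induction p; simpl in *.
  - tauto.
  - reflexivity.
  - rewrite H0; auto. reflexivity.
  - rewrite H1; auto. reflexivity.
  - destruct Hin, Hs. rewrite IHp1, IHp2 by auto. apply fe_meet1.
  - destruct Hin. destruct Hs.
    + rewrite IHp1 by auto. apply fe_join_top_l.
    + rewrite IHp2 by auto. apply fe_join_top_r.
Qed.

(** ** Real-valued interpretation of faces *)
Definition gg (s : R) : R := Rmax 0 (2 * s - 1).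

Fixpoint hat (p : face) (rho : nat -> R) : R :=
  match p with
  | fbot => 0
  | ftop => 1
  | feq0 k => gg (1 - rho k)
  | feq1 k => gg (rho k)
  | fmeet a b => Rmin (hat a rho) (hat b rho)
  | fjoin a b => Rmax (hat a rho) (hat b rho)
  end.

Lemma hat_bound p rho : bnd rho -> 0 <= hat p rho <= 1.
Proof.
  intros Hb. induction p; simpl; try lra; try (specialize (Hb k); unfold gg; rm); rm.
Qed.

Lemma hat_inv p q rho : bnd rho -> face_eq p q -> hat p rho = hat q rho.
Proof.
  intros Hb H. induction H; simpl; try congruence;
  repeat match goal with |- context [hat ?a rho] =>
    let h := fresh in pose proof (hat_bound a rho Hb) as h; revert h; generalize (hat a rho) end;
  intros; try rm.
  specialize (Hb k). unfold gg. rm.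
Qed.

Lemma hat_tf rho t b : hat (tf b t) rho = gg (if b then ev rho t else 1 - ev rho t).
Proof.
  revert b; induction t; intros b; destruct b; simpl; try rewrite IHt1, IHt2; try rewrite IHt;
  unfold gg; simpl; try rm.
  all: f_equal; ring.
Qed.

Lemma hat_subst s p rho : hat (face_subst s p) rho = hat p (fun k => ev rho (s k)).
Proof. induction p; simpl; try rewrite IHp1, IHp2; auto; rewrite hat_tf; auto. Qed.

Lemma hat_ext (K : cobj) p rho rho' : face_in K p ->
  (forall k, mem K k = true -> rho k = rho' k) -> hat p rho = hat p rho'.
Proof. intros Hin H. induction p; simpl in *; try rewrite H; intuition congruence. Qed.

Lemma hat_lip p rho rho' e : (forall n, Rabs (rho n - rho' n) <= e) ->
  Rabs (hat p rho - hat p rho') <= 2 * e.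
Proof.
  intros H. assert (He : 0 <= e) by (specialize (H 0%nat); pose proof (Rabs_pos (rho 0%nat - rho' 0%nat)); lra).
  induction p; simpl.
  - rewrite Rminus_0_r, Rabs_R0; lra.
  - replace (1-1) with 0 by ring; rewrite Rabs_R0; lra.
  - specialize (H k). unfold gg. apply Rabs_le'. apply Rabs_def2b in H. rm.
  - specialize (H k). unfold gg. apply Rabs_le'. apply Rabs_def2b in H. rm.
  - apply Rabs_def2b in IHp1. apply Rabs_def2b in IHp2. apply Rabs_le'. rm.
  - apply Rabs_def2b in IHp1. apply Rabs_def2b in IHp2. apply Rabs_le'. rm.
Qed.

Lemma hat_thresh p rho d : 0 <= d <= 1/2 -> 1 - d <= hat p rho ->
  sat p (fun k => Rmax 0 (Rmin (rho k + d * (2 * rho k - 1)) 1)).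
Proof.
  intros Hd. induction p; simpl; unfold gg; intros H.
  - lra.
  - auto.
  - assert (rho k <= d/2) by rm.
    assert (rho k + d * (2 * rho k - 1) <= 0) by nra. rm.
  - assert (rho k >= 1 - d/2) by rm.
    assert (rho k + d * (2 * rho k - 1) >= 1) by nra. rm.
  - split; [apply IHp1|apply IHp2]; rm.
  - unfold Rmax at 1 in H. destruct Rle_dec; [right; apply IHp2|left; apply IHp1]; lra.
Qed.

(** ** The sharpening function *)
Definition Hs (d s : R) : R := Rmax 0 (Rmin (s + d * (2 * s - 1)) 1).

Lemma Hs_bnd d s : 0 <= Hs d s <= 1.
Proof. unfold Hs; rm. Qed.

Lemma Hs_mono d a b : 0 <= d -> a <= b -> Hs d a <= Hs d b.
Proof.
  intros Hd Hab. unfold Hs.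
  assert (a + d * (2 * a - 1) <= b + d * (2 * b - 1)) by nra. rm.
Qed.

Lemma Hs_min d a b : 0 <= d -> Hs d (Rmin a b) = Rmin (Hs d a) (Hs d b).
Proof.
  intros Hd. unfold Rmin at 1. destruct Rle_dec as [h|h].
  - pose proof (Hs_mono d a b Hd h). unfold Rmin; destruct Rle_dec; lra.
  - assert (b <= a) by lra. pose proof (Hs_mono d b a Hd H). unfold Rmin; destruct Rle_dec; lra.
Qed.

Lemma Hs_max d a b : 0 <= d -> Hs d (Rmax a b) = Rmax (Hs d a) (Hs d b).
Proof.
  intros Hd. unfold Rmax at 1. destruct Rle_dec as [h|h].
  - pose proof (Hs_mono d a b Hd h). unfold Rmax; destruct Rle_dec; lra.
  - assert (b <= a) by lra. pose proof (Hs_mono d b a Hd H). unfold Rmax; destruct Rle_dec; lra.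
Qed.

Lemma Hs_neg d s : Hs d (1 - s) = 1 - Hs d s.
Proof.
  unfold Hs. replace (1 - s + d * (2 * (1 - s) - 1)) with (1 - (s + d * (2 * s - 1))) by ring.
  generalize (s + d * (2 * s - 1)); intros; rm.
Qed.

Lemma Hs_0 d : 0 <= d -> Hs d 0 = 0.
Proof. intros; unfold Hs; rm. Qed.
Lemma Hs_1 d : 0 <= d -> Hs d 1 = 1.
Proof. intros; unfold Hs; rm. Qed.
Lemma Hs_id s : 0 <= s <= 1 -> Hs 0 s = s.
Proof. intros; unfold Hs. replace (s + 0 * (2 * s - 1)) with s by ring. rm. Qed.

Lemma ev_Hs d rho t : 0 <= d -> ev (fun n => Hs d (rho n)) t = Hs d (ev rho t).
Proof.
  intros Hd. induction t; simpl; try rewrite IHt1, IHt2; try rewrite IHt.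
  - auto.
  - rewrite Hs_0; auto.
  - rewrite Hs_1; auto.
  - rewrite Hs_min; auto.
  - rewrite Hs_max; auto.
  - rewrite Hs_neg; auto.
Qed.

Lemma Hs_lip d d' s s' e e2 : 0 <= d <= 1/2 -> 0 <= d' <= 1/2 -> 0 <= s <= 1 -> 0 <= s' <= 1 ->
  Rabs (s - s') <= e -> Rabs (d - d') <= e2 -> Rabs (Hs d s - Hs d' s') <= 2 * e + e2.
Proof.
  intros Hd Hd' Hs_ Hs' H1 H2. apply Rabs_def2b in H1. apply Rabs_def2b in H2.
  assert (Hx : - (2 * e + e2) <= (s + d * (2 * s - 1)) - (s' + d' * (2 * s' - 1)) <= 2 * e + e2).
  { replace ((s + d * (2 * s - 1)) - (s' + d' * (2 * s' - 1))) with
      ((s - s') * (1 + 2 * d) + (d - d') * (2 * s' - 1)) by ring.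
    split; nra. }
  apply Rabs_le'. unfold Hs. revert Hx. generalize (s + d * (2 * s - 1)) (s' + d' * (2 * s' - 1)).
  intros. rm.
Qed.

Lemma ev_subst rho s t : ev rho (subst s t) = ev (fun n => ev rho (s n)) t.
Proof. induction t; simpl; congruence. Qed.

Lemma ev_ext (K : cobj) rho rho' t : dM_in K t ->
  (forall k, mem K k = true -> rho k = rho' k) -> ev rho t = ev rho' t.
Proof.
  intros Hin H. induction t; simpl in *;
  [apply H; auto | auto | auto | destruct Hin; f_equal; auto | destruct Hin; f_equal; auto | f_equal; auto].
Qed.

Definition pat (rho : nat -> R) (k : nat) : option bool :=
  if Req_EM_T (rho k) 1 then Some true else if Req_EM_T (rho k) 0 then Some false else None.

Definition fmap_ (c : nat -> option bool) (k : nat) : dM :=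
  match c k with Some true => done | Some false => dzero | None => dvar k end.

Lemma fm_wf (K : cobj) c : forall k, mem K k = true -> dM_in K (fmap_ c k).
Proof. intros k Hk. unfold fmap_. destruct (c k) as [[|]|]; simpl; auto. Qed.

Definition fm (K : cobj) c : hom K K := mkHom (fmap_ c) (fm_wf K c).

Lemma pat_1 rho k : rho k = 1 -> pat rho k = Some true.
Proof. intros H; unfold pat; destruct Req_EM_T; [auto|contradiction]. Qed.
Lemma pat_0 rho k : rho k = 0 -> pat rho k = Some false.
Proof. intros H; unfold pat; destruct Req_EM_T; [lra|]. destruct Req_EM_T; [auto|contradiction]. Qed.
Lemma pat_spec rho k : match pat rho k with Some true => rho k = 1 | Some false => rho k = 0
  | None => rho k <> 1 /\ rho k <> 0 end.
Proof. unfold pat; repeat destruct Req_EM_T; auto. Qed.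

Lemma ev_fmap rho k : ev rho (fmap_ (pat rho) k) = rho k.
Proof. unfold fmap_. pose proof (pat_spec rho k). destruct (pat rho k) as [[|]|]; simpl; auto. Qed.

Lemma L01 rho t : bnd rho ->
  (ev rho t = 1 -> dM_eq (subst (fmap_ (pat rho)) t) done) /\
  (ev rho t = 0 -> dM_eq (subst (fmap_ (pat rho)) t) dzero).
Proof.
  intros Hb. induction t; simpl.
  - unfold fmap_. pose proof (pat_spec rho n). destruct (pat rho n) as [[|]|];
    split; intros; try reflexivity; lra.
  - split; intros; [lra|reflexivity].
  - split; intros; [reflexivity|lra].
  - pose proof (ev_bound rho t1 Hb). pose proof (ev_bound rho t2 Hb).
    destruct IHt1 as [A1 B1], IHt2 as [A2 B2]. split; intros Hev.
    + rewrite A1, A2 by rm. apply dMe_meet1.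
    + unfold Rmin in Hev; destruct Rle_dec.
      * rewrite B1 by lra. apply dm_meet0_l.
      * rewrite B2 by lra. rewrite dMe_meetC. apply dm_meet0_l.
  - pose proof (ev_bound rho t1 Hb). pose proof (ev_bound rho t2 Hb).
    destruct IHt1 as [A1 B1], IHt2 as [A2 B2]. split; intros Hev.
    + unfold Rmax in Hev; destruct Rle_dec.
      * rewrite A2 by lra. rewrite dMe_joinC. apply dm_join1_l.
      * rewrite A1 by lra. apply dm_join1_l.
    + rewrite B1, B2 by rm. apply dMe_join0.
  - destruct IHt as [A B]. split; intros Hev.
    + rewrite B by lra. apply dMe_neg0.
    + rewrite A by lra. apply dm_neg1.
Qed.

Definition mkpt (K : cobj) (F : nat -> R) (HF : bnd F) : cube K :=
  exist (fun w : {k : nat | mem K k = true} -> R => forall k, 0 <= w k <= 1)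
        (fun k => F (proj1_sig k)) (fun k => HF (proj1_sig k)).

Lemma extv_in {K : cobj} (w : cube K) n (h : mem K n = true) :
  extv w n = proj1_sig w (exist _ n h).
Proof.
  unfold extv. destruct (sb (mem K n)) as [h'|h'].
  - f_equal. f_equal. apply proof_irrelevance.
  - congruence.
Qed.

Lemma extv_out {K : cobj} (w : cube K) n : mem K n = false -> extv w n = 0.
Proof. intros h. unfold extv. destruct (sb (mem K n)) as [h'|h']; congruence. Qed.

Lemma extv_mkpt K F HF n : mem K n = true -> extv (mkpt K F HF) n = F n.
Proof. intros h. rewrite (extv_in _ n h). reflexivity. Qed.

Lemma cube_eq {K : cobj} (p q : cube K) :
  (forall n, mem K n = true -> extv p n = extv q n) -> p = q.
Proof.
  intros H. destruct p as [fp Hp], q as [fq Hq].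
  assert (fp = fq).
  { apply functional_extensionality. intros [n hn].
    specialize (H n hn). rewrite !(extv_in _ n hn) in H. exact H. }
  subst fq. f_equal. apply proof_irrelevance.
Qed.

Lemma extv_cube_map {J I : cobj} (f : hom J I) (u : cube J) k :
  mem I k = true -> extv (cube_map f u) k = ev (extv u) (f k).
Proof. intros h. rewrite (extv_in _ k h). reflexivity. Qed.

Lemma cube_map_comp {I J K : cobj} (f : hom J I) (g : hom K J) (u : cube K) :
  cube_map (hom_comp f g) u = cube_map f (cube_map g u).
Proof.
  apply cube_eq. intros n hn. rewrite !extv_cube_map by auto. simpl.
  rewrite ev_subst. apply (ev_ext J). apply hwf; auto.
  intros k hk. rewrite extv_cube_map; auto.
Qed.

Lemma fm_fix {K : cobj} (w : cube K) : cube_map (fm K (pat (extv w))) w = w.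
Proof.
  apply cube_eq. intros n hn. rewrite extv_cube_map by auto. simpl. apply ev_fmap.
Qed.

Lemma sing_eq (X : Top) (I : cobj) (a b : sing_ob X I) :
  (forall x, proj1_sig a x = proj1_sig b x) -> a = b.
Proof.
  intros H. destruct a as [fa Ha], b as [fb Hb]. simpl in H.
  assert (fa = fb) by (apply functional_extensionality; auto). subst. f_equal. apply proof_irrelevance.
Qed.

Lemma incl_wf (I : cobj) (i : nat) : forall k, mem I k = true -> dM_in (add I i) (dvar k).
Proof. intros k h. simpl. unfold mem; simpl. fold (mem I k). rewrite h. auto. Qed.

Definition incl (I : cobj) (i : nat) : hom (add I i) I := mkHom (fun k => dvar k) (incl_wf I i).

Lemma mem_add (I : cobj) i k : mem (add I i) k = (mem I k || Nat.eqb k i).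
Proof. reflexivity. Qed.

Section Comp.
Variable X : Top.
Variable I : cobj.
Variable i : nat.
Variable phi : face.
Variable u : Defs.family (Sing X) I i phi.
Variable a0 : sing_ob X I.

Local Notation K := (add I i).

Definition Uf (w : cube K) : X :=
  match excluded_middle_informative
          (face_eq (face_subst (fm K (pat (extv w))) phi) ftop) with
  | left h => proj1_sig (u K (fm K (pat (extv w))) h : sing_ob X K) w
  | right _ => proj1_sig a0 (cube_map (incl I i) w)
  end.

Lemma fam_res (Hok : family_ok (Sing X) I i phi u) J J' (f : hom J K) (g : hom J' J) h h' q :
  proj1_sig (u J f h : sing_ob X J) (cube_map g q) = proj1_sig (u J' (hom_comp f g) h' : sing_ob X J') q.
Proof.
  destruct Hok as [_ H2]. specialize (H2 J J' f g h h').
  change (proj1_sig (sing_res X J J' g (u J f h)) q = proj1_sig (u J' (hom_comp f g) h' : sing_ob X J') q).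
  simpl in H2. rewrite H2. reflexivity.
Qed.

Lemma fam_heq (Hok : family_ok (Sing X) I i phi u) J (f g : hom J K) h h' q :
  heq f g -> proj1_sig (u J f h : sing_ob X J) q = proj1_sig (u J g h' : sing_ob X J) q.
Proof. destruct Hok as [H1 _]. intros He. rewrite (H1 J f g h h' He). reflexivity. Qed.

Lemma comp_top {J J' : cobj} (f : hom J K) (g : hom J' J) :
  face_eq (face_subst f phi) ftop -> face_eq (face_subst (hom_comp f g) phi) ftop.
Proof. intros h. rewrite face_subst_comp. apply (face_subst_cong g) in h. exact h. Qed.

Lemma sat_of_top (Hin : face_in I phi) J (G : hom J K) (h : face_eq (face_subst G phi) ftop) q :
  sat phi (extv (cube_map G q)).
Proof.
  assert (Hs : sat (face_subst G phi) (extv q)) by (apply (sat_inv _ _ _ h); simpl; auto).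
  apply (proj1 (sat_subst G phi (extv q) (extv_bound q))) in Hs.
  assert (HK : face_in K phi).
  { apply (face_in_mono I K phi); auto. intros n hn. rewrite mem_add, hn. auto. }
  refine (proj1 (sat_ext K phi _ (extv (cube_map G q)) HK _) Hs).
  intros k hk. rewrite extv_cube_map; auto.
Qed.

Lemma top_of_sat (Hin : face_in I phi) (w : cube K) :
  sat phi (extv w) -> face_eq (face_subst (fm K (pat (extv w))) phi) ftop.
Proof.
  intros Hs. apply (sat_face I phi (extv w)); auto; intros k _ hk; simpl; unfold fmap_.
  - rewrite pat_1; auto.
  - rewrite pat_0; auto.
Qed.

Lemma lemW (Hok : family_ok (Sing X) I i phi u) (Hin : face_in I phi)
  J (G : hom J K) h q : proj1_sig (u J G h : sing_ob X J) q = Uf (cube_map G q).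
Proof.
  set (w := cube_map G q).
  assert (PF := top_of_sat Hin w (sat_of_top Hin J G h q)).
  unfold Uf. destruct excluded_middle_informative as [h0|n]; [|contradiction].
  set (F := fm K (pat (extv w))) in *.
  set (fq := fm J (pat (extv q))).
  rewrite <- (fm_fix q) at 1.
  rewrite (fam_res Hok J J G fq h (comp_top G fq h)).
  rewrite (fam_heq Hok J (hom_comp G fq) (hom_comp F (hom_comp G fq)) _ (comp_top F _ h0)).
  - rewrite <- (fam_res Hok K J F (hom_comp G fq) h0).
    rewrite cube_map_comp. unfold fq. rewrite fm_fix. reflexivity.
  - intros k hk. simpl.
    change (fmap_ (pat (extv w)) k) with
      (match pat (extv w) k with Some true => done | Some false => dzero | None => dvar k end).
    pose proof (pat_spec (extv w) k) as Hp.
    destruct (pat (extv w) k) as [[|]|]; simpl.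
    + apply (proj1 (L01 (extv q) (G k) (extv_bound q))). unfold w in Hp. rewrite extv_cube_map in Hp; auto.
    + apply (proj2 (L01 (extv q) (G k) (extv_bound q))). unfold w in Hp. rewrite extv_cube_map in Hp; auto.
    + reflexivity.
Qed.

Definition pI (x : cube I) : R := hat phi (extv x).
Definition delta (x : cube I) : R := Rmin (1 - pI x) (1/2).
Definition beta (x : cube I) : R := Rmax 0 (Rmin (2 * pI x - 1) 1).
Definition zF (x : cube I) (n : nat) : R :=
  if Nat.eqb n i then beta x else Hs (delta x) (extv x n).

Lemma pI_bnd x : 0 <= pI x <= 1.
Proof. apply hat_bound. exact (extv_bound x). Qed.
Lemma delta_bnd x : 0 <= delta x <= 1/2.
Proof. pose proof (pI_bnd x). unfold delta. rm. Qed.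
Lemma beta_bnd x : 0 <= beta x <= 1.
Proof. unfold beta. rm. Qed.

Lemma zF_bnd x : bnd (zF x).
Proof. intros n. unfold zF. destruct Nat.eqb. apply beta_bnd. apply Hs_bnd. Qed.

Definition zpt (x : cube I) : cube K := mkpt K (zF x) (zF_bnd x).

Definition cfun (x : cube I) : X := Uf (zpt x).

Lemma zpt_i x : extv (zpt x) i = beta x.
Proof. unfold zpt. rewrite extv_mkpt. unfold zF. rewrite Nat.eqb_refl. auto. rewrite mem_add, Nat.eqb_refl, orb_true_r. auto. Qed.

Lemma zpt_I (Hi : mem I i = false) x k : mem I k = true -> extv (zpt x) k = Hs (delta x) (extv x k).
Proof.
  intros hk. unfold zpt. rewrite extv_mkpt by (rewrite mem_add, hk; auto). unfold zF.
  destruct (Nat.eqb_spec k i); [subst; congruence|auto].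
Qed.

Lemma zpt_sat (Hi : mem I i = false) (Hin : face_in I phi) x : 1/2 <= pI x -> sat phi (extv (zpt x)).
Proof.
  intros Hp. pose proof (delta_bnd x) as Hd.
  assert (Ht := hat_thresh phi (extv x) (delta x) Hd ltac:(unfold delta, pI in *; rm)).
  refine (proj1 (sat_ext I phi _ _ Hin _) Ht).
  intros k hk. rewrite zpt_I; auto.
Qed.

(** ** Neighbourhoods *)
Definition nbhd {L : cobj} (x0 : cube L) (P : cube L -> Prop) : Prop :=
  exists e, 0 < e /\ forall x : cube L,
    (forall k, Rabs (proj1_sig x k - proj1_sig x0 k) < e) -> P x.

Lemma nb_mono {L : cobj} (x0 : cube L) (P Q : cube L -> Prop) :
  (forall x, P x -> Q x) -> nbhd x0 P -> nbhd x0 Q.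
Proof. intros H [e [He H1]]. exists e; split; auto. Qed.

Lemma nb_true {L : cobj} (x0 : cube L) (P : cube L -> Prop) : (forall x, P x) -> nbhd x0 P.
Proof. intros H. exists 1; split; auto; lra. Qed.

Lemma nb_and {L : cobj} (x0 : cube L) (P Q : cube L -> Prop) :
  nbhd x0 P -> nbhd x0 Q -> nbhd x0 (fun x => P x /\ Q x).
Proof.
  intros [e1 [He1 H1]] [e2 [He2 H2]]. exists (Rmin e1 e2). split.
  - unfold Rmin; destruct Rle_dec; lra.
  - intros x Hx. split; [apply H1|apply H2]; intros k; specialize (Hx k); rm.
Qed.

Lemma nb_list {L : cobj} {A : Type} (x0 : cube L) (l : list A) (P : A -> cube L -> Prop) :
  (forall a, In a l -> nbhd x0 (P a)) -> nbhd x0 (fun x => forall a, In a l -> P a x).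
Proof.
  induction l as [|b l IH]; intros H.
  - apply nb_true. intros x a [].
  - apply (nb_mono x0 (fun x => P b x /\ (forall a, In a l -> P a x))).
    + intros x [H1 H2] a [->|Ha]; auto.
    + apply nb_and; auto. apply H; simpl; auto. apply IH. intros a Ha; apply H; simpl; auto.
Qed.

Lemma nb_cont (Y : Top) {L : cobj} (g : cube L -> Y) (x0 : cube L) V :
  cont Y L g -> topen Y V -> V (g x0) -> nbhd x0 (fun x => V (g x)).
Proof. intros Hg HV Hx. exact (Hg V HV x0 Hx). Qed.

Lemma nb_cube_map {J L : cobj} (f : hom J L) (x0 : cube J) (P : cube L -> Prop) :
  nbhd (cube_map f x0) P -> nbhd x0 (fun x => P (cube_map f x)).
Proof.
  intros [e [He H]]. exists e; split; auto. intros x Hx. apply H. apply cube_map_lip; auto.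
Qed.

Fixpoint subs (l : list nat) : list (list nat) :=
  match l with
  | nil => nil :: nil
  | a :: l' => map (cons a) (subs l') ++ subs l'
  end.

Lemma filter_subs f l : In (filter f l) (subs l).
Proof.
  induction l as [|a l IH]; simpl; auto.
  destruct (f a); apply in_or_app; [left; apply in_map; auto | right; auto].
Qed.

Lemma existsb_in k L : existsb (Nat.eqb k) L = true <-> In k L.
Proof.
  rewrite existsb_exists. split.
  - intros [y [Hy E]]. apply Nat.eqb_eq in E. subst; auto.
  - intros H. exists k; split; auto. apply Nat.eqb_refl.
Qed.

Lemma mem_lt (L : cobj) : exists N, forall n, mem L n = true -> (n < N)%nat.
Proof.
  destruct (proj2_sig L) as [N HN]. exists N. intros n hn.
  destruct (Nat.lt_ge_cases n N); auto. unfold mem in hn. rewrite HN in hn; auto. discriminate.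
Qed.

Lemma extv_diff {L : cobj} (x x0 : cube L) e : 0 < e ->
  (forall k, Rabs (proj1_sig x k - proj1_sig x0 k) < e) -> forall n, Rabs (extv x n - extv x0 n) <= e.
Proof.
  intros He H n. destruct (sb (mem L n)) as [h|h].
  - rewrite !(extv_in _ n h). left; apply H.
  - rewrite !extv_out by auto. rewrite Rminus_0_r, Rabs_R0. lra.
Qed.

Lemma z_lip (x x0 : cube I) e : 0 < e ->
  (forall k, Rabs (proj1_sig x k - proj1_sig x0 k) < e) ->
  forall k, Rabs (proj1_sig (zpt x) k - proj1_sig (zpt x0) k) <= 4 * e.
Proof.
  intros He H k. pose proof (extv_diff x x0 e He H) as Hd.
  assert (Hp : Rabs (pI x - pI x0) <= 2 * e) by (unfold pI; apply hat_lip; exact Hd).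
  pose proof (pI_bnd x). pose proof (pI_bnd x0).
  apply Rabs_def2b in Hp.
  simpl. unfold zF. destruct (Nat.eqb _ i).
  - apply Rabs_le'. unfold beta. rm.
  - apply Rabs_le'. apply Rabs_def2b.
    replace (4 * e) with (2 * e + 2 * e) by ring.
    apply Hs_lip; try apply delta_bnd; try apply extv_bound; auto.
    apply Rabs_le'. unfold delta. rm.
Qed.

Lemma nb_z (x0 : cube I) (Q : cube K -> Prop) :
  nbhd (zpt x0) Q -> nbhd x0 (fun x => Q (zpt x)).
Proof.
  intros [e [He H]]. exists (e / 5). split; [lra|]. intros x Hx. apply H. intros k.
  pose proof (z_lip x x0 (e/5) ltac:(lra) Hx k). lra.
Qed.

Lemma P_sat (Hin : face_in I phi) (w : cube K) :
  face_eq (face_subst (fm K (pat (extv w))) phi) ftop -> sat phi (extv w).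
Proof.
  intros h. pose proof (sat_of_top Hin K _ h w) as Hs. rewrite fm_fix in Hs. exact Hs.
Qed.

Lemma Uf_nsat (Hin : face_in I phi) (w : cube K) :
  ~ sat phi (extv w) -> Uf w = proj1_sig a0 (cube_map (incl I i) w).
Proof.
  intros Hn. unfold Uf. destruct excluded_middle_informative as [h|h]; auto.
  exfalso. apply Hn. apply P_sat; auto.
Qed.

Lemma Sep (w0 : cube K) : nbhd w0 (fun w => forall n, mem K n = true ->
    (extv w n = 1 -> extv w0 n = 1) /\ (extv w n = 0 -> extv w0 n = 0)).
Proof.
  destruct (mem_lt K) as [N HN].
  apply (nb_mono w0 (fun w => forall n, In n (seq 0 N) -> mem K n = true ->
    (extv w n = 1 -> extv w0 n = 1) /\ (extv w n = 0 -> extv w0 n = 0))).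
  { intros w H n hn. apply H; auto. apply in_seq. specialize (HN n hn). lia. }
  apply nb_list. intros n _.
  destruct (sb (mem K n)) as [h|h]; [|apply nb_true; intros; congruence].
  set (c := extv w0 n). pose proof (extv_bound w0 n) as Hc. fold c in Hc.
  destruct (Req_EM_T c 0) as [E0|E0]; [|destruct (Req_EM_T c 1) as [E1|E1]].
  - exists (1/2). split; [lra|]. intros w Hw _. specialize (Hw (exist _ n h)).
    rewrite <- (extv_in w n h) in Hw. rewrite <- (extv_in w0 n h) in Hw. fold c in Hw.
    apply Rabs_lt_iff in Hw. split; intros; lra.
  - exists (1/2). split; [lra|]. intros w Hw _. specialize (Hw (exist _ n h)).
    rewrite <- (extv_in w n h) in Hw. rewrite <- (extv_in w0 n h) in Hw. fold c in Hw.
    apply Rabs_lt_iff in Hw. split; intros; lra.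
  - exists (Rmin c (1 - c)). split; [unfold Rmin; destruct Rle_dec; lra|].
    intros w Hw _. specialize (Hw (exist _ n h)).
    rewrite <- (extv_in w n h) in Hw. rewrite <- (extv_in w0 n h) in Hw. fold c in Hw.
    apply Rabs_lt_iff in Hw. split; intros; rm.
Qed.

Lemma face_subst_var p : face_subst dvar p = p.
Proof. induction p; simpl; congruence. Qed.

Lemma a0_base (Hv : valid (Sing X) I i phi u a0) (w : cube K) :
  sat phi (extv w) -> extv w i = 0 -> proj1_sig a0 (cube_map (incl I i) w) = Uf w.
Proof.
  destruct Hv as [Hi [Hin [Hok Hbase]]]. intros Hs Hw.
  set (y0 := cube_map (incl I i) w).
  assert (Hy : forall k, mem I k = true -> extv y0 k = extv w k).
  { intros k hk. unfold y0. rewrite extv_cube_map; auto. }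
  assert (Hsy : sat phi (extv y0)).
  { refine (proj2 (sat_ext I phi _ _ Hin Hy) Hs). }
  set (f := fm I (pat (extv y0))).
  assert (hf : face_eq (face_subst f phi) ftop).
  { apply (sat_face I phi (extv y0)); auto; intros k _ hk; simpl; unfold fmap_.
    - rewrite pat_1; auto.
    - rewrite pat_0; auto. }
  set (fi := face_i I i false).
  assert (Efi : face_subst fi phi = phi).
  { rewrite (face_subst_ext I fi dvar phi Hin). apply face_subst_var.
    intros k hk. simpl. destruct (Nat.eqb_spec k i); [subst; congruence|auto]. }
  assert (h' : face_eq (face_subst (hom_comp fi f) phi) ftop).
  { rewrite face_subst_comp, Efi. exact hf. }
  pose proof (Hbase I f hf h') as HB.
  transitivity (proj1_sig a0 (cube_map f y0)).
  { unfold f. rewrite fm_fix. reflexivity. }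
  change (proj1_sig (sing_res X I I f a0) y0 = Uf w).
  simpl in HB. rewrite HB. rewrite lemW; auto.
  rewrite cube_map_comp. unfold f. rewrite fm_fix. f_equal.
  apply cube_eq. intros n hn. rewrite extv_cube_map by auto. simpl.
  destruct (Nat.eqb_spec n i).
  - subst. simpl. auto.
  - simpl. apply Hy. rewrite mem_add in hn. apply Nat.eqb_neq in n0. rewrite n0, orb_false_r in hn. auto.
Qed.

Definition gL (z0 : cube K) (L : list nat) : hom K K :=
  fm K (fun n => if existsb (Nat.eqb n) L then pat (extv z0) n else None).

Lemma gL_fix (z0 w : cube K) L :
  (forall n, mem K n = true -> In n L -> pat (extv z0) n = pat (extv w) n) ->
  cube_map (gL z0 L) w = w.
Proof.
  intros H. apply cube_eq. intros n hn. rewrite extv_cube_map by auto. simpl. unfold fmap_.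
  destruct (existsb (Nat.eqb n) L) eqn:E.
  - apply existsb_in in E. rewrite H by auto. pose proof (pat_spec (extv w) n) as Hp.
    destruct (pat (extv w) n) as [[|]|]; simpl; auto.
  - auto.
Qed.

Lemma cfun_cont (Hv : valid (Sing X) I i phi u a0) : cont X I cfun.
Proof.
  pose proof Hv as Hv'. destruct Hv' as [Hi [Hin [Hok Hbase]]].
  assert (HK : face_in K phi).
  { apply (face_in_mono I K phi); auto. intros n hn. rewrite mem_add, hn. auto. }
  intros V HV x0 Hx0. change (nbhd x0 (fun x => V (cfun x))).
  set (z0 := zpt x0).
  pose proof (nb_z x0 _ (Sep z0)) as HS. fold z0 in HS.
  assert (Hmono : forall x, (forall n, mem K n = true ->
      (extv (zpt x) n = 1 -> extv z0 n = 1) /\ (extv (zpt x) n = 0 -> extv z0 n = 0)) ->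
      sat phi (extv (zpt x)) -> sat phi (extv z0)).
  { intros x Hx Hs. exact (sat_mono K phi _ _ HK Hx Hs). }
  assert (Ha0 : cont X K (fun w => proj1_sig a0 (cube_map (incl I i) w))).
  { apply cont_comp. exact (proj2_sig a0). }
  destruct (classic (sat phi (extv z0))) as [S0|nS0].
  2:{
    assert (E0 : cfun x0 = proj1_sig a0 (cube_map (incl I i) z0)) by (apply Uf_nsat; auto).
    rewrite E0 in Hx0.
    pose proof (nb_z x0 _ (nb_cont X _ z0 V Ha0 HV Hx0)) as H2.
    eapply nb_mono; [|exact (nb_and x0 _ _ HS H2)].
    intros x [Hx1 Hx2]. unfold cfun. rewrite Uf_nsat; [exact Hx2 | exact Hin | ].
    intro Hs. apply nS0. exact (Hmono x Hx1 Hs). }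
  assert (Hns : nbhd x0 (fun x => ~ sat phi (extv (zpt x)) -> V (cfun x))).
  { destruct (Rle_lt_dec (beta x0) 0) as [Hb|Hb].
    - assert (Hb0 : beta x0 = 0) by (pose proof (beta_bnd x0); lra).
      assert (E : proj1_sig a0 (cube_map (incl I i) z0) = cfun x0).
      { apply a0_base; auto. unfold z0. rewrite zpt_i. auto. }
      rewrite <- E in Hx0.
      pose proof (nb_z x0 _ (nb_cont X _ z0 V Ha0 HV Hx0)) as H2.
      eapply nb_mono; [|exact H2]. intros x Hx Hn. unfold cfun. rewrite Uf_nsat; auto.
    - assert (Hbz : nbhd z0 (fun w => extv w i > 0)).
      { exists (beta x0). split; auto. intros w Hw.
        assert (hi : mem K i = true) by (rewrite mem_add, Nat.eqb_refl, orb_true_r; auto).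
        specialize (Hw (exist _ i hi)). rewrite <- !(extv_in _ i hi) in Hw.
        unfold z0 in Hw. rewrite zpt_i in Hw. apply Rabs_lt_iff in Hw. lra. }
      pose proof (nb_z x0 _ Hbz) as H2.
      eapply nb_mono; [|exact H2]. intros x Hx Hn. exfalso. apply Hn.
      simpl in Hx; rewrite zpt_i in Hx. apply zpt_sat; auto. unfold beta in Hx. rm. }
  destruct (mem_lt K) as [N HN].
  set (K0 := filter (fun n => match pat (extv z0) n with Some _ => true | None => false end) (seq 0 N)).
  assert (HQ : nbhd x0 (fun x => forall L, In L (subs K0) ->
     forall h : face_eq (face_subst (gL z0 L) phi) ftop,
       V (proj1_sig (u K (gL z0 L) h : sing_ob X K) (zpt x)))).
  { apply nb_list. intros L _.
    destruct (classic (face_eq (face_subst (gL z0 L) phi) ftop)) as [h0|nh].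
    2:{ apply nb_true. intros x h. contradiction. }
    assert (Hv0 : V (proj1_sig (u K (gL z0 L) h0 : sing_ob X K) z0)).
    { rewrite lemW; auto. rewrite gL_fix; auto. }
    pose proof (nb_z x0 _ (nb_cont X _ z0 V (proj2_sig (u K (gL z0 L) h0 : sing_ob X K)) HV Hv0)) as H2.
    eapply nb_mono; [|exact H2]. intros x Hx h.
    rewrite (proof_irrelevance _ h h0). exact Hx. }
  eapply nb_mono; [|exact (nb_and x0 _ _ (nb_and x0 _ _ HS Hns) HQ)].
  intros x [[Hsep Hn] Hq].
  destruct (classic (sat phi (extv (zpt x)))) as [Sx|nSx]; [|auto].
  set (w := zpt x) in *.
  set (L := filter (fun n => match pat (extv w) n with Some _ => true | None => false end) K0).
  assert (HL : forall n, mem K n = true -> In n L -> pat (extv z0) n = pat (extv w) n).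
  { intros n hn HnL. unfold L in HnL. apply filter_In in HnL. destruct HnL as [_ Hw].
    pose proof (pat_spec (extv w) n) as Hp.
    destruct (pat (extv w) n) as [[|]|]; [| |discriminate].
    - apply pat_1. apply (Hsep n hn); auto.
    - apply pat_0. apply (Hsep n hn); auto. }
  assert (Hin_n : forall n, mem K n = true -> pat (extv w) n <> None -> In n L).
  { intros n hn Hne. unfold L, K0. apply filter_In. split.
    - apply filter_In. split. apply in_seq. specialize (HN n hn). lia.
      pose proof (pat_spec (extv w) n) as Hp.
      destruct (pat (extv w) n) as [[|]|]; [| |congruence].
      + rewrite pat_1; auto. apply (Hsep n hn); auto.
      + rewrite pat_0; auto. apply (Hsep n hn); auto.
    - destruct (pat (extv w) n); congruence. }
  assert (hL : face_eq (face_subst (gL z0 L) phi) ftop).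
  { apply (sat_face K phi (extv w)); auto; intros k hk Hk; simpl; unfold fmap_.
    - assert (Hk' : pat (extv w) k = Some true) by (apply pat_1; auto).
      assert (HkL : In k L) by (apply Hin_n; auto; congruence).
      rewrite (proj2 (existsb_in k L) HkL), HL, Hk'; auto.
    - assert (Hk' : pat (extv w) k = Some false) by (apply pat_0; auto).
      assert (HkL : In k L) by (apply Hin_n; auto; congruence).
      rewrite (proj2 (existsb_in k L) HkL), HL, Hk'; auto. }
  specialize (Hq L (filter_subs _ K0) hL).
  unfold cfun. fold w. rewrite <- (gL_fix z0 w L HL). rewrite <- (lemW Hok Hin K (gL z0 L) hL w). exact Hq.
Qed.

Lemma cfun_full (Hv : valid (Sing X) I i phi u a0) (Htop : face_eq phi ftop)
  (h : face_eq (face_subst (face_i I i true) phi) ftop) x :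
  cfun x = proj1_sig (u I (face_i I i true) h : sing_ob X I) x.
Proof.
  destruct Hv as [Hi [Hin [Hok Hbase]]].
  rewrite lemW; auto. unfold cfun. f_equal.
  assert (Hp : pI x = 1) by (unfold pI; rewrite (hat_inv _ _ _ (extv_bound x) Htop); auto).
  assert (Hdl : delta x = 0) by (unfold delta; rewrite Hp; rm).
  apply cube_eq. intros n hn. rewrite extv_cube_map by auto. simpl.
  destruct (Nat.eqb_spec n i) as [Eni|Eni].
  - subst. rewrite zpt_i. simpl. unfold beta. rewrite Hp. rm.
  - assert (hnI : mem I n = true).
    { rewrite mem_add in hn. apply Nat.eqb_neq in Eni. rewrite Eni, orb_false_r in hn. auto. }
    rewrite zpt_I by auto. rewrite Hdl. apply Hs_id. apply extv_bound.
Qed.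

End Comp.

Lemma cfun_proper X I i phi psi u v a0 : face_eq phi psi ->
  (forall J f h h', u J f h = v J f h') ->
  forall x, cfun X I i phi u a0 x = cfun X I i psi v a0 x.
Proof.
  intros Hpq Huv x. unfold cfun.
  assert (Hp : pI I phi x = pI I psi x) by (unfold pI; apply hat_inv; auto; exact (extv_bound x)).
  assert (Ez : zpt I i phi x = zpt I i psi x).
  { apply cube_eq. intros n hn. unfold zpt. rewrite !extv_mkpt by auto.
    unfold zF, beta, delta. rewrite Hp. reflexivity. }
  rewrite Ez. generalize (zpt I i psi x) as w. intros w.
  unfold Uf.
  destruct excluded_middle_informative as [h1|n1];
  destruct excluded_middle_informative as [h2|n2].
  - rewrite (Huv _ _ h1 h2). reflexivity.
  - exfalso. apply n2. rewrite <- (face_subst_cong (fm (add I i) (pat (extv w))) _ _ Hpq). exact h1.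
  - exfalso. apply n1. rewrite (face_subst_cong (fm (add I i) (pat (extv w))) _ _ Hpq). exact h2.
  - reflexivity.
Qed.

Lemma cfun_nat X I i phi u a0 J j (f : hom J I) u' :
  valid (Sing X) I i phi u a0 ->
  valid (Sing X) J j (face_subst f phi) u' (sing_res X I J f a0) ->
  (forall K g h h', u' K g h = u K (hom_comp (hom_ext f i j) g) h') ->
  forall x, cfun X I i phi u a0 (cube_map f x) = cfun X J j (face_subst f phi) u' (sing_res X I J f a0) x.
Proof.
  intros HvI HvJ Hu x.
  pose proof HvI as [Hi [Hin [Hok Hbase]]].
  pose proof HvJ as [Hj [HinJ [HokJ HbaseJ]]].
  set (E := hom_ext f i j).
  assert (HEk : forall k, mem I k = true -> E k = f k).
  { intros k hk. simpl. destruct (Nat.eqb_spec k i); [subst; congruence|auto]. }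
  assert (HEphi : face_subst E phi = face_subst f phi) by (apply (face_subst_ext I); auto).
  assert (Hp : pI I phi (cube_map f x) = pI J (face_subst f phi) x).
  { unfold pI. rewrite hat_subst. apply (hat_ext I); auto. intros k hk. rewrite extv_cube_map; auto. }
  set (w := zpt J j (face_subst f phi) x).
  assert (Ez : zpt I i phi (cube_map f x) = cube_map E w).
  { apply cube_eq. intros n hn. rewrite extv_cube_map by auto. simpl.
    destruct (Nat.eqb_spec n i) as [Eni|Eni].
    - subst n. simpl. unfold w. rewrite !zpt_i. unfold beta. rewrite Hp. reflexivity.
    - assert (hnI : mem I n = true).
      { rewrite mem_add in hn. apply Nat.eqb_neq in Eni. rewrite Eni, orb_false_r in hn. auto. }
      rewrite zpt_I by auto. unfold delta. rewrite Hp. fold (delta J (face_subst f phi) x).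
      rewrite extv_cube_map by auto.
      rewrite (ev_ext J (extv w) (fun m => Hs (delta J (face_subst f phi) x) (extv x m))).
      + rewrite ev_Hs; auto. apply delta_bnd.
      + apply hwf; auto.
      + intros m hm. unfold w. rewrite zpt_I; auto. }
  unfold cfun at 1. rewrite Ez. unfold cfun. fold w.
  clearbody w.
  assert (HsatE : sat phi (extv (cube_map E w)) <-> sat (face_subst f phi) (extv w)).
  { rewrite (sat_subst f phi (extv w) (extv_bound w)).
    apply (sat_ext I); auto. intros k hk. rewrite extv_cube_map by (rewrite mem_add, hk; auto).
    rewrite HEk; auto. }
  destruct (classic (sat (face_subst f phi) (extv w))) as [S|nS].
  - set (G := fm (add J j) (pat (extv w))).
    assert (hG : face_eq (face_subst G (face_subst f phi)) ftop) by (apply top_of_sat; auto).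
    assert (hG2 : face_eq (face_subst (hom_comp E G) phi) ftop).
    { rewrite face_subst_comp, HEphi. exact hG. }
    transitivity (proj1_sig (u' (add J j) G hG : sing_ob X (add J j)) w).
    2:{ rewrite (lemW X J j _ u' (sing_res X I J f a0) HokJ HinJ). unfold G. rewrite fm_fix. reflexivity. }
    rewrite (Hu _ G hG hG2).
    rewrite (lemW X I i phi u a0 Hok Hin). rewrite cube_map_comp. unfold G. rewrite fm_fix. reflexivity.
  - rewrite Uf_nsat by (auto; rewrite HsatE; auto).
    rewrite Uf_nsat by auto. simpl. f_equal.
    apply cube_eq. intros k hk. rewrite !extv_cube_map by auto. simpl.
    rewrite extv_cube_map by (rewrite mem_add, hk; auto). rewrite HEk by auto.
    apply (ev_ext J). apply hwf; auto. intros m hm. rewrite extv_cube_map by auto. reflexivity.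
Qed.

Definition compF (X : Top) (I : cobj) (i : nat) (phi : face)
  (u : Defs.family (Sing X) I i phi) (a0 : sing_ob X I) : sing_ob X I :=
  match excluded_middle_informative (valid (Sing X) I i phi u a0) with
  | left H => exist _ (cfun X I i phi u a0) (cfun_cont X I i phi u a0 H)
  | right _ => a0
  end.

Lemma compF_val X I i phi u a0 : valid (Sing X) I i phi u a0 ->
  forall x, proj1_sig (compF X I i phi u a0) x = cfun X I i phi u a0 x.
Proof.
  intros Hv x. unfold compF. destruct excluded_middle_informative; [reflexivity|contradiction].
Qed.

Definition sing_comp (X : Top) : comp_structure (Sing X).
Proof.
  refine {| Defs.comp := fun I i phi u a0 => compF X I i phi u a0 |}.
  - intros I i phi psi u v a0 Hu Hv Hpq Huv. apply sing_eq. intros x.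
    rewrite (compF_val X I i phi u a0 Hu), (compF_val X I i psi v a0 Hv).
    apply cfun_proper; auto.
  - intros I i phi u a0 J j f u' HvI HvJ Hu. apply sing_eq. intros x.
    simpl. rewrite (compF_val X I i phi u a0 HvI).
    rewrite (compF_val X J j (face_subst f phi) u' (sing_res X I J f a0) HvJ).
    apply cfun_nat; auto.
  - intros I i phi u a0 h Hv Htop. apply sing_eq. intros x.
    rewrite (compF_val X I i phi u a0 Hv). apply cfun_full; auto.
Defined.

Theorem corollaryC2 : forall X : Top, inhabited (comp_structure (Sing X)).
Proof. intros X. exact (inhabits (sing_comp X)). Qed.
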